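(* Let $p$ be a prime and $m\ge 3$, and let $\mathcal{G}$ be the set of all groups isomorphic to either $D_1=\mathbb{Z}_p^m$ or $D_2=\mathbb{Z}_p^{m-2}\times\mathbb{Z}_{p^2}$. Any deterministic algorithm that determines whether a given $G\in\mathcal{G}$ is isomorphic to $D_1$ or to $D_2$ must access the elements of $G$ and its Cayley table at least $\Omega(p^{m-2})=\Omega(|G|/p^2)$ times.
   Context: The element sets of the groups in $\mathcal{G}$ are subsets of a fixed countable set. The algorithm accesses elements of $G$ one at a time and queries the Cayley table on elements it has obtained; each such access counts as one access. *)

(* Defs.v *)
From HB Require Import structures.
From mathcomp Require Import all_boot all_order all_algebra.
Set Implicit Arguments. Unset Strict Implicit. Unset Printing Implicit Defensive.
Import GRing.Theory.
Local Open Scope ring_scope.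

Definition D1 (p m : nat) : zmodType := 'rV['Z_p]_m.
Definition D2 (p m : nat) : zmodType := ('rV['Z_p]_(m - 2) * 'Z_(p ^ 2))%type.

(* A group presented by a Cayley table: its elements are natural numbers
   (the fixed countable ambient set), listed in the order [carrier], and
   [cmul] is its multiplication table. *)
Record cayley_input := CayleyInput {
  carrier : seq nat;
  cmul : nat -> nat -> nat }.

Definition iso_to (V : zmodType) (G : cayley_input) : Prop :=
  uniq (carrier G) /\
  {in carrier G &, forall x y, cmul G x y \in carrier G} /\
  exists phi : nat -> V,
    {in carrier G &, injective phi} /\
    (forall v : V, exists2 x, x \in carrier G & phi x = v) /\
    {in carrier G &, forall x y, phi (cmul G x y) = phi x + phi y}.

Definition in_calG (p m : nat) (G : cayley_input) : Prop :=
  iso_to (D1 p m) G \/ iso_to (D2 p m) G.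

(* Deterministic (adaptive) query algorithms, as decision trees.
   - [QElem k c]  : access the k-th element of G (index taken mod |G|);
   - [QMul x y c] : query the Cayley table at (x, y); answered only if
                    x and y are elements already obtained, otherwise the
                    answer is the dummy 0 and nothing is learned;
   - [Output b]   : stop and answer b (true = "G is isomorphic to D1"). *)
Inductive algo :=
| Output of bool
| QElem of nat & (nat -> algo)
| QMul of nat & nat & (nat -> algo).

Fixpoint run (a : algo) (G : cayley_input) (hist : seq nat) : bool * nat :=
  match a with
  | Output b => (b, 0%N)
  | QElem k c =>
      let x := nth 0%N (carrier G) (k %% size (carrier G)) in
      let r := run (c x) G (x :: hist) in (r.1, r.2.+1)
  | QMul x y c =>
      if (x \in hist) && (y \in hist) then
        let z := cmul G x y in
        let r := run (c z) G (z :: hist) in (r.1, r.2.+1)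
      else
        let r := run (c 0%N) G hist in (r.1, r.2.+1)
  end.

Definition answer (a : algo) (G : cayley_input) : bool := (run a G [::]).1.
Definition cost (a : algo) (G : cayley_input) : nat := (run a G [::]).2.

(* Main.v *)
Require Import Defs.
From mathcomp Require Import all_boot all_order all_algebra all_fingroup zify.
Set Implicit Arguments. Unset Strict Implicit. Unset Printing Implicit Defensive.
Import GRing.Theory.

Definition carr (K : finType) (s : {perm K}) : seq nat := [seq pickle (s k) | k <- enum K].

Lemma carr_nth (K : finType) (k0 : K) (s : {perm K}) k :
  nth 0%N (carr s) (k %% size (carr s)) = pickle (s (nth k0 (enum K) (k %% #|K|))).
Proof.
have Kp : (0 < #|K|)%N by apply/card_gt0P; exists k0.
rewrite /carr size_map -cardE (nth_map k0) // -cardE ltn_pmod //.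
Qed.

Lemma adv (K : finType) (k0 : K) (S : {set K}) (cm1 cm2 : nat -> nat -> nat)
  (Hcm : forall k k', k \in S -> k' \in S ->
     cm1 (pickle k) (pickle k') = cm2 (pickle k) (pickle k') /\
     exists2 k'', k'' \in S & cm1 (pickle k) (pickle k') = pickle k'')
  (A : algo) : forall B hist (s : {perm K}) (F : {set K}),
  (forall x, x \in hist -> exists2 k, k \in S & x = pickle k) ->
  {in F, forall x, s x \in S} -> (#|F| + B <= #|S|)%N ->
  exists s' : {perm K}, {in F, s' =1 s} /\
   ((B <= (run A (CayleyInput (carr s') cm1) hist).2)%N \/
    run A (CayleyInput (carr s') cm1) hist = run A (CayleyInput (carr s') cm2) hist).
Proof.
elim: A => [b | k c IH | x y c IH] B hist s F Hh HF HB.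
- by exists s; split => //; right.
- case: B HB => [|B] HB; first by exists s; split => //; left.
  set i := nth k0 (enum K) (k %% #|K|).
  case: (boolP (i \in F)) => iF.
  + have Si := HF i iF.
    have [s' [E' H']] := IH (pickle (s i)) B (pickle (s i) :: hist) s F
      ltac:(move=> z; rewrite inE => /orP [/eqP ->|]; [by exists (s i)|exact: Hh]) HF
      ltac:(by apply: leq_trans HB; rewrite addnS).
    exists s'; split => //=.
    rewrite !(carr_nth k0) -/i (E' i iF).
    by case: H' => [H'|->]; [left|right].
  + have [l] : exists l, l \in S :\: [set s x | x in F].
      apply/set0Pn; rewrite setD_eq0; apply/negP => /subset_leq_card.
      have := leq_imset_card s F => h1 h2.
      have := leq_trans h2 h1. by rewrite leqNgt; move: HB; rewrite addnS => /(leq_trans _) -> //; rewrite ltnS leq_addr.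
    rewrite inE => /andP [lnF lS].
    set j := (s^-1)%g l.
    have jF : j \notin F.
      apply: contra lnF => jF; apply/imsetP; exists j => //; by rewrite /j permKV.
    set s1 := (tperm i j * s)%g.
    have s1F : {in F, s1 =1 s}.
      move=> x xF; rewrite /s1 permM tpermD //.
      by apply: contraNneq iF => ->.
      by apply: contraNneq jF => ->.
    have s1i : s1 i = l by rewrite /s1 permM tpermL /j permKV.
    have [s' [E' H']] := IH (pickle l) B (pickle l :: hist) s1 (i |: F)
      ltac:(move=> z; rewrite inE => /orP [/eqP ->|]; [by exists l|exact: Hh])
      ltac:(move=> x; rewrite !inE => /orP [/eqP ->|xF]; [by rewrite s1i|by rewrite s1F // HF])
      ltac:(by rewrite cardsU1 iF add1n addSnnS).
    exists s'; split.
      by move=> x xF; rewrite E' ?inE ?xF ?orbT // s1F.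
    rewrite /= !(carr_nth k0) -/i E' ?inE ?eqxx // s1i.
    by case: H' => [H'|->]; [left|right].
- case: B HB => [|B] HB; first by exists s; split => //; left.
  case hxy: ((x \in hist) && (y \in hist)).
  + case/andP: (hxy) => hx hy.
    have [kx Sx ex] := Hh x hx. have [ky Sy ey] := Hh y hy.
    have [E2 [k'' S'' E3]] := Hcm kx ky Sx Sy.
    rewrite -ex -ey in E2 E3.
    have [s' [E' H']] := IH (cm1 x y) B (cm1 x y :: hist) s F
      ltac:(move=> z; rewrite inE => /orP [/eqP ->|]; [by exists k''|exact: Hh]) HF
      ltac:(by apply: leq_trans HB; rewrite addnS).
    exists s'; split => //; rewrite /= hxy -E2.
    by case: H' => [H'|->]; [left|right].
  + have [s' [E' H']] := IH 0%N B hist s F Hh HF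
      ltac:(by apply: leq_trans HB; rewrite addnS).
    exists s'; split => //; rewrite /= hxy.
    by case: H' => [H'|->]; [left|right].
Qed.

Lemma noniso (V W : zmodType) (p : nat) G :
  (forall v : V, v *+ p = 0)%R -> (exists w : W, w *+ p != 0)%R ->
  iso_to V G -> iso_to W G -> False.
Proof.
move=> Vp [w wp] [_ [cl [phi [phiI [phiS phiM]]]]] [_ [_ [psi [psiI [psiS psiM]]]]].
have [x0 x0G ex0] := psiS w.
pose y n := iter n (fun y => cmul G y x0) x0.
have Hy : forall n, y n \in carrier G /\ phi (y n) = (phi x0 *+ n.+1)%R /\ psi (y n) = (psi x0 *+ n.+1)%R.
  elim=> [|k [Hk [E1 E2]]]; first by [].
  rewrite /y /= -/(y k); split; first exact: cl.
  by rewrite phiM // psiM // E1 E2 -!mulrSr.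
have [H1 [E1 _]] := Hy p. have [H0 [E0 _]] := Hy 0%N.
have eq : y p = y 0%N by apply: phiI => //; rewrite E1 E0 mulrSr Vp add0r.
have [_ [_ F1]] := Hy p. have [_ [_ F0]] := Hy 0%N.
have : (psi x0 *+ p.+1 = psi x0 *+ 1)%R by rewrite -F1 -F0 eq.
rewrite mulrSr mulr1n ex0 => h.
have h2 : (w *+ p = 0)%R by apply: (addIr w); rewrite h add0r.
by move: wp; rewrite h2 eqxx.
Qed.

Lemma D1p (p m : nat) : prime p -> forall v : D1 p m, (v *+ p = 0)%R.
Proof.
move=> pp v; apply/matrixP => i j; rewrite mulmxnE !mxE -mulr_natr pchar_Zp ?mulr0 //.
exact: prime_gt1.
Qed.

Lemma D2p (p m : nat) : prime p -> exists w : D2 p m, (w *+ p != 0)%R.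
Proof.
move=> pp; exists (0%R, 1%R).
have p1 := prime_gt1 pp.
apply/negP => /eqP /(congr1 snd) /=.
have -> : forall k, (((0%R, 1%R) *+ k : D2 p m).2 = 1 *+ k)%R.
  by elim=> // k IH; rewrite !mulrS /= IH.
move/(congr1 val); rewrite /= val_Zp_nat ?modn_small //.
- by move=> h; move: p1; rewrite h.
- by rewrite -mulnn ltn_Pmull // ltnW.
- by rewrite -mulnn (leq_trans p1) // leq_pmull // ltnW.
Qed.

Definition cmK (K : finType) (V : zmodType) (k0 : K) (d : K -> V) (g : V -> K) :=
  fun x y => pickle (g (d (odflt k0 (unpickle x)) + d (odflt k0 (unpickle y))))%R.

Lemma carr_mem (K : finType) (s : {perm K}) (k : K) : pickle k \in carr s.
Proof.
apply/mapP; exists ((s^-1)%g k); first by rewrite mem_enum.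
by rewrite permKV.
Qed.

Lemma iso_gen (K : finType) (V : zmodType) (k0 : K) (d : K -> V) (g : V -> K)
  (dK : cancel d g) (gK : cancel g d) (s : {perm K}) :
  iso_to V (CayleyInput (carr s) (cmK k0 d g)).
Proof.
split; first by rewrite map_inj_uniq ?enum_uniq // => a b /(pcan_inj pickleK) /perm_inj.
split; first by move=> x y _ _; exact: carr_mem.
exists (fun x => d (odflt k0 (unpickle x))); split.
  move=> x y /mapP [a _ ->] /mapP [b _ ->]; rewrite /= !pickleK /=.
  by move/(can_inj dK) ->.
split.
  move=> v; exists (pickle (g v)); first exact: carr_mem.
  by rewrite pickleK /= gK.
by move=> x y _ _; rewrite /= /cmK pickleK /= gK.
Qed.

Theorem mainTheorem16 :
  exists c : nat, (0 < c)%N /\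
  forall (p m : nat), prime p -> (3 <= m)%N ->
  forall A : algo,
    (forall G, in_calG p m G -> (answer A G = true <-> iso_to (D1 p m) G)) ->
    exists G, in_calG p m G /\ (p ^ (m - 2) <= c * cost A G)%N.
Proof.
exists 1%N; split => // p m pp m3 A HA.
have [n em] : exists n, m = n.+3 by exists (m - 3)%N; lia.
subst m.
have p1 := prime_gt1 pp.
have ltp : forall u : 'Z_p, (u < p)%N := fun u => leq_trans (ltn_ord u) (eq_leq (Zp_cast p1)).
have cZp : #|'Z_p| = p by rewrite card_ord Zp_cast.
have p21 : (1 < p ^ 2)%N by rewrite -mulnn (leq_trans p1) // leq_pmull // ltnW.
have cZp2 : #|'Z_(p ^ 2)| = (p ^ 2)%N by rewrite card_ord Zp_cast.
pose K : finType := ('rV['Z_p]_(n.+1) * 'Z_p * 'Z_p)%type.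
pose k0 : K := (0%R, 0%R, 0%R).
pose d1 : K -> 'rV['Z_p]_(n.+3) := fun k =>
  row_mx (\row_(_ < 1) k.2) (row_mx (\row_(_ < 1) k.1.2) k.1.1).
pose d2 : K -> ('rV['Z_p]_(n.+1) * 'Z_(p ^ 2))%type := fun k =>
  (k.1.1, ((k.1.2 : nat) * p + k.2)%:R)%R.
have cK : #|K| = (p ^ n.+3)%N.
  by rewrite !card_prod card_mx cZp mul1n -!expnSr.
have d1I : injective d1.
  move=> [[r a] t] [[r' a'] t']; rewrite /d1 /= => E; have [e1 E2] := @eq_row_mx _ 1 1 (1 + n.+1) _ _ _ _ E; have [e2 e3] := @eq_row_mx _ 1 1 n.+1 _ _ _ _ E2.
  move/matrixP: e1 => /(_ ord0 ord0); rewrite !mxE => ->.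
  move/matrixP: e2 => /(_ ord0 ord0); rewrite !mxE => ->.
  by rewrite e3.
have d2I : injective d2.
  move=> [[r a] t] [[r' a'] t']; rewrite /d2 /= => -[-> /(congr1 val)].
  have lt : forall (u v : 'Z_p), (u * p + v < p ^ 2)%N.
    move=> u v; have hu := ltp u; have hv := ltp v.
    rewrite -mulnn; apply: (@leq_trans (u * p + p)); first by rewrite ltn_add2l.
    by rewrite -mulSnr leq_mul2r hu orbT.
  rewrite /= !val_Zp_nat // !modn_small // => e.
  have ep : forall (u v : 'Z_p), (u * p + v) %% p = v /\ (u * p + v) %/ p = u.
    move=> u v; have hv := ltp v.
    by rewrite modnMDl modn_small // divnMDl ?divn_small ?addn0 // ltnW.
  have [ea ea'] := ep a t; have [eb eb'] := ep a' t'.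
  rewrite e in ea ea'; rewrite ea in eb; rewrite ea' in eb'.
  by rewrite (val_inj eb) (val_inj eb').
have [g1 d1K g1K] : bijective d1.
  apply: inj_card_bij => //; rewrite card_mx cK cZp mul1n //.
have [g2 d2K g2K] : bijective d2.
  apply: inj_card_bij => //; rewrite card_prod card_mx cK cZp cZp2 mul1n.
  by rewrite -expnD addn2.
pose S : {set K} := [set k : K | k.2 == 0%R].
have hom1 : forall r a r' a', (d1 (r, a, 0) + d1 (r', a', 0) = d1 (r + r', a + a', 0))%R.
  move=> r a r' a'; rewrite /d1 /= (@add_row_mx _ 1 1 (1 + n.+1)) (@add_row_mx _ 1 1 n.+1).
  have er : forall x y : 'Z_p, (\row_(_ < 1) x + \row_(_ < 1) y = \row_(_ < 1) (x + y) :> 'rV_1)%R.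
    by move=> x y; apply/matrixP => i j; rewrite !mxE.
  by rewrite !er addr0.
have hom2 : forall r a r' a', (d2 (r, a, 0) + d2 (r', a', 0) = d2 (r + r', a + a', 0))%R.
  move=> r a r' a'; rewrite /d2 /=; congr pair.
  rewrite -natrD; apply: val_inj; rewrite /= !val_Zp_nat // !addn0.
  have -> : ((a + a') %% (Zp_trunc p).+2 = (a + a') %% p)%N by congr (_ %% _); exact: Zp_cast.
  by rewrite muln_modl -mulnDl -mulnn modn_mod.
pose cm1 := cmK k0 d1 g1; pose cm2 := cmK k0 d2 g2.
have Hcm : forall k k', k \in S -> k' \in S -> cm1 (pickle k) (pickle k') = cm2 (pickle k) (pickle k') /\
     exists2 k'', k'' \in S & cm1 (pickle k) (pickle k') = pickle k''.
  move=> [[r a] t] [[r' a'] t']; rewrite !inE /= => /eqP -> /eqP ->.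
  rewrite /cm1 /cm2 /cmK !pickleK /= hom1 hom2 d1K d2K; split => //.
  by exists (r + r', a + a', 0)%R; rewrite ?inE.
have [s' [_ H]] := @adv _ k0 S cm1 cm2 Hcm A #|S| [::] 1%g set0
  ltac:(by move=> x; rewrite in_nil) ltac:(by move=> x; rewrite inE) ltac:(by rewrite cards0).
have iso1 : iso_to (D1 p n.+3) (CayleyInput (carr s') cm1) := iso_gen k0 d1K g1K s'.
have iso2 : iso_to (D2 p n.+3) (CayleyInput (carr s') cm2) := iso_gen k0 d2K g2K s'.
case: H => [Hc | Heq].
- exists (CayleyInput (carr s') cm1); split; first by left.
  rewrite mul1n /cost; apply: leq_trans Hc.
  have -> : (n.+3 - 2 = n.+1)%N by [].
  have <- : #|[set ((r, 0, 0)%R : K) | r : 'rV['Z_p]_(n.+1)]| = (p ^ n.+1)%N.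
    rewrite card_imset; first by rewrite card_mx cZp mul1n.
    by move=> r r' [].
  apply: subset_leq_card; apply/subsetP => _ /imsetP [r _ ->]; by rewrite inE.
- exfalso.
  have a1 : answer A (CayleyInput (carr s') cm1) = true by apply/(HA _ (or_introl iso1)).
  have a2 : answer A (CayleyInput (carr s') cm2) = true by rewrite /answer -Heq.
  have iso12 := (HA _ (or_intror iso2)).1 a2.
  apply: (@noniso (D1 p n.+3) (D2 p n.+3) p _ _ _ iso12 iso2).
  exact: D1p. exact: D2p.
Qed.
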